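(* Let $A$ and $B$ be countable groups equipped with left-invariant proper metrics, and equip the free product $G=A\ast B$ with the natural left-invariant proper metric induced from $A$ and $B$. If $A$ and $B$ have asymptotic property C, then $G$ has asymptotic property C.
   Context: Writing $\|\cdot\|_A,\|\cdot\|_B$ for the norms $\|a\|=d(e,a)$, the natural metric on $A\ast B$ is $d(g,h)=\|g^{-1}h\|$, where for $g$ with normal form $g=g_1\cdots g_\ell$ (each $g_i$ a non-trivial element of $A$ or $B$, consecutive ones from different factors) $\|g\|=\sum_i\|g_i\|$. A metric is proper if bounded sets are finite. A metric space $X$ has asymptotic property C if for every sequence $R_1\le R_2\le\cdots$ of positive numbers there exist $n$ and families $\mathcal U^1,\dots,\mathcal U^n$ of subsets, each uniformly bounded (sup of diameters finite), with $\mathcal U^i$ $R_i$-disjoint (distinct members at distance $>R_i$), whose union covers $X$. *)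

(* Defs.v *)
From HB Require Import structures.
From mathcomp Require Import all_boot all_order all_algebra.
From mathcomp Require Import reals.
From Stdlib Require Lists.List.
Set Implicit Arguments. Unset Strict Implicit. Unset Printing Implicit Defensive.
Import Order.TTheory GRing.Theory Num.Theory.
Local Open Scope ring_scope.

Definition is_group (T : Type) (mul : T -> T -> T) (inv : T -> T) (e : T) : Prop :=
  (forall x y z, mul x (mul y z) = mul (mul x y) z) /\
  (forall x, mul e x = x) /\ (forall x, mul x e = x) /\
  (forall x, mul (inv x) x = e) /\ (forall x, mul x (inv x) = e).

Definition countable_type (T : Type) : Prop := exists f : T -> nat, injective f.

Definition is_metric (R : realType) (T : Type) (d : T -> T -> R) : Prop :=
  (forall x y, 0 <= d x y) /\ (forall x y, d x y = 0 <-> x = y) /\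
  (forall x y, d x y = d y x) /\ (forall x y z, d x z <= d x y + d y z).

Definition left_invariant (R : realType) (T : Type) (mul : T -> T -> T)
  (d : T -> T -> R) : Prop := forall g x y, d (mul g x) (mul g y) = d x y.

Definition finite_pred (T : Type) (S : T -> Prop) : Prop :=
  exists s : list T, forall x, S x -> Stdlib.Lists.List.In x s.

Definition bounded_pred (R : realType) (T : Type) (d : T -> T -> R) (S : T -> Prop) : Prop :=
  exists r : R, forall x y, S x -> S y -> d x y <= r.

Definition proper_metric (R : realType) (T : Type) (d : T -> T -> R) : Prop :=
  forall S : T -> Prop, bounded_pred d S -> finite_pred S.

Definition unif_bounded (R : realType) (T : Type) (d : T -> T -> R)
  (F : (T -> Prop) -> Prop) : Prop :=
  exists D : R, forall V, F V -> forall x y, V x -> V y -> d x y <= D.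

Definition r_disjoint (R : realType) (T : Type) (d : T -> T -> R) (r : R)
  (F : (T -> Prop) -> Prop) : Prop :=
  forall V W, F V -> F W -> V <> W -> forall x y, V x -> W y -> r < d x y.

(* asymptotic property C; the sequence R_1 <= R_2 <= ... is indexed from 0 here *)
Definition asymptotic_property_C (R : realType) (T : Type) (d : T -> T -> R) : Prop :=
  forall Rs : nat -> R, (forall i, 0 < Rs i) -> (forall i, Rs i <= Rs i.+1) ->
  exists n : nat, exists U : nat -> ((T -> Prop) -> Prop),
    (forall i, (i < n)%N -> unif_bounded d (U i) /\ r_disjoint d (Rs i) (U i)) /\
    (forall x, exists i, (i < n)%N /\ exists V, U i V /\ V x).

Section FreeProduct.
Variables (A B : eqType) (mulA : A -> A -> A) (invA : A -> A) (eA : A)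
          (mulB : B -> B -> B) (invB : B -> B) (eB : B).

Definition fp_nontriv (x : A + B) : bool :=
  match x with inl a => a != eA | inr b => b != eB end.

Definition fp_same_factor (x y : A + B) : bool :=
  match x, y with inl _, inl _ => true | inr _, inr _ => true | _, _ => false end.

Definition fp_reduced (w : seq (A + B)) : bool :=
  all fp_nontriv w && sorted (fun x y => ~~ fp_same_factor x y) w.

Definition fp_push (x : A + B) (w : seq (A + B)) : seq (A + B) :=
  if ~~ fp_nontriv x then w else
  match x, w with
  | inl a, inl a' :: w' => let c := mulA a a' in if c == eA then w' else inl c :: w'
  | inr b, inr b' :: w' => let c := mulB b b' in if c == eB then w' else inr c :: w'
  | _, _ => x :: w
  end.

Definition fp_mul (u w : seq (A + B)) : seq (A + B) := foldr fp_push w u.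

Definition fp_inv_letter (x : A + B) : A + B :=
  match x with inl a => inl (invA a) | inr b => inr (invB b) end.

Definition fp_inv (u : seq (A + B)) : seq (A + B) := rev (map fp_inv_letter u).

Definition FreeProd : Type := {w : seq (A + B) | fp_reduced w}.

Variables (R : realType) (dA : A -> A -> R) (dB : B -> B -> R).

Definition fp_norm (w : seq (A + B)) : R :=
  \sum_(x <- w) (match x with inl a => dA eA a | inr b => dB eB b end).

Definition fp_dist (g h : FreeProd) : R :=
  fp_norm (fp_mul (fp_inv (proj1_sig g)) (proj1_sig h)).

End FreeProduct.

Arguments fp_dist {A B} mulA invA eA mulB invB eB {R} dA dB g h.

(* Main.v *)
Require Import Defs.
From HB Require Import structures.
From mathcomp Require Import all_boot all_order all_algebra.
From mathcomp Require Import reals.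
From mathcomp Require Import lra zify.
From Stdlib Require Import Classical.
Set Implicit Arguments. Unset Strict Implicit. Unset Printing Implicit Defensive.
Import Order.TTheory GRing.Theory Num.Theory.
Local Open Scope ring_scope.

Section Grp.
Variables (T : eqType) (mul : T -> T -> T) (inv : T -> T) (e : T).
Variables (R : realType) (d : T -> T -> R).
Hypothesis hG : is_group mul inv e.
Hypothesis hM : is_metric d.
Hypothesis hL : left_invariant mul d.

Lemma g_invK_e a : inv a = e -> a = e.
Proof.
case: hG => hA [h1 [h2 [h3 h4]]] H.
by rewrite -(h3 a) H h1.
Qed.

Lemma g_inv_mul_eq a a' : mul (inv a) a' = e -> a = a'.
Proof.
case: hG => hA [h1 [h2 [h3 h4]]] H.
by rewrite -(h1 a') -(h4 a) -hA H h2.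
Qed.

Lemma g_dist_inv_mul a a' : d e (mul (inv a) a') = d a a'.
Proof.
case: hG => hA [h1 [h2 [h3 h4]]].
by rewrite -(hL a) hA h4 h1 h2.
Qed.

Lemma g_norm_inv a : d e (inv a) = d e a.
Proof.
case: hG => hA [h1 [h2 [h3 h4]]].
case: hM => m1 [m2 [m3 m4]].
by rewrite -(hL a) h4 h2 m3.
Qed.
End Grp.
Section FP.
Variables (A B : eqType) (mulA : A -> A -> A) (invA : A -> A) (eA : A)
  (mulB : B -> B -> B) (invB : B -> B) (eB : B)
  (R : realType) (dA : A -> A -> R) (dB : B -> B -> R).
Hypotheses (gA : is_group mulA invA eA) (gB : is_group mulB invB eB)
  (mA : is_metric dA) (lA : left_invariant mulA dA)
  (mB : is_metric dB) (lB : left_invariant mulB dB).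

Local Notation L := (A + B)%type.
Local Notation push := (fp_push mulA eA mulB eB).
Local Notation fmul := (fp_mul mulA eA mulB eB).
Local Notation finv := (fp_inv invA invB).
Local Notation red := (fp_reduced eA eB).
Local Notation ntr := (fp_nontriv eA eB).
Local Notation sf := (@fp_same_factor A B).
Local Notation ilet := (fp_inv_letter invA invB).
Local Notation nm := (fp_norm eA eB dA dB).

Definition nrm (z : L) : R := match z with inl a => dA eA a | inr b => dB eB b end.
Definition ldist (z z' : L) : R :=
  match z, z' with inl a, inl a' => dA a a' | inr b, inr b' => dB b b'
  | _, _ => nrm z + nrm z' end.
Definition D (g h : seq L) : R := nm (fmul (finv g) h).

Lemma nmE w : nm w = \sum_(x <- w) nrm x.
Proof. by []. Qed.
Lemma nm_nil : nm [::] = 0.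
Proof. by rewrite nmE big_nil. Qed.
Lemma nm_cons z w : nm (z :: w) = nrm z + nm w.
Proof. by rewrite !nmE big_cons. Qed.
Lemma nm_cat u w : nm (u ++ w) = nm u + nm w.
Proof. by rewrite !nmE big_cat. Qed.

Lemma nrm_ge0 z : 0 <= nrm z.
Proof. case: z => [a|b] /=; [case: mA => -> // | case: mB => -> //]. Qed.
Lemma nm_ge0 w : 0 <= nm w.
Proof. elim: w => [|z w IH]; rewrite ?nm_nil ?nm_cons //; have := nrm_ge0 z; lra. Qed.

Lemma nrm_inv z : nrm (ilet z) = nrm z.
Proof. case: z => [a|b] /=; [exact: (g_norm_inv gA mA lA) | exact: (g_norm_inv gB mB lB)]. Qed.

Lemma nm_rev w : nm (rev w) = nm w.
Proof. by rewrite !nmE big_rev. Qed.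
Lemma nm_finv g : nm (finv g) = nm g.
Proof.
rewrite /fp_inv nm_rev !nmE big_map; apply: eq_bigr => z _; exact: nrm_inv.
Qed.

Lemma fmul_cat u v w : fmul (u ++ v) w = fmul u (fmul v w).
Proof. by rewrite /fp_mul foldr_cat. Qed.

Lemma finv_cons z g : finv (z :: g) = finv g ++ [:: ilet z].
Proof. by rewrite /fp_inv map_cons rev_cons cats1. Qed.

Lemma fmul_finv_cons z g w : fmul (finv (z :: g)) w = fmul (finv g) (push (ilet z) w).
Proof. by rewrite finv_cons fmul_cat. Qed.

Lemma inv_e_A : invA eA = eA.
Proof. case: gA => _ [_ [H2 [H3 _]]]; by rewrite -{2}(H3 eA) H2. Qed.
Lemma inv_e_B : invB eB = eB.
Proof. case: gB => _ [_ [H2 [H3 _]]]; by rewrite -{2}(H3 eB) H2. Qed.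

Lemma ntr_inv z : ntr (ilet z) = ntr z.
Proof.
case: z => [a|b] /=.
- case: (eqVneq a eA) => [->|ne]; first by rewrite inv_e_A eqxx.
  apply/eqP => H; move/eqP: ne; apply; exact: (g_invK_e gA).
- case: (eqVneq b eB) => [->|ne]; first by rewrite inv_e_B eqxx.
  apply/eqP => H; move/eqP: ne; apply; exact: (g_invK_e gB).
Qed.

Lemma sf_inv z y : sf (ilet z) y = sf z y.
Proof. by case: z; case: y. Qed.
Lemma sf_invr z y : sf z (ilet y) = sf z y.
Proof. by case: z; case: y. Qed.
Lemma sf_sym z y : sf z y = sf y z.
Proof. by case: z; case: y. Qed.

Lemma push_cancel z w : ntr z -> push (ilet z) (z :: w) = w.
Proof.
move=> nz; rewrite /fp_push ntr_inv nz /=.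
case: z nz => [a|b] /= _.
- by case: gA => _ [_ [_ [-> _]]]; rewrite eqxx.
- by case: gB => _ [_ [_ [-> _]]]; rewrite eqxx.
Qed.

Lemma push_nocancel z w : ntr z -> (forall y w', w = y :: w' -> ~~ sf z y) ->
  push z w = z :: w.
Proof.
move=> nz H; rewrite /fp_push nz /=.
case: w H => [|y w'] H; first by clear H; case: z nz.
move: (H y w' erefl); clear H; by case: z nz; case: y.
Qed.

Lemma red_cons z w : red (z :: w) = [&& ntr z, red w &
   (if w is y :: _ then ~~ sf z y else true)].
Proof.
rewrite /fp_reduced /=; case: w => [|y w] /=; first by rewrite !andbT.
by rewrite !andbA; case: (ntr z); case: (ntr y); case: (all _ w); case: (sf z y);
   case: (path _ y w).
Qed.

Lemma fmul_red u w : red (u ++ w) -> fmul u w = u ++ w.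
Proof.
elim: u => [|z u IH] //= Hr.
move: Hr; rewrite red_cons => /and3P [nz ruw hd].
rewrite IH // push_nocancel // => y w' E; by rewrite E in hd.
Qed.

Lemma red_inv_cat g w : red g -> red w ->
  (forall x g' y w', g = x :: g' -> w = y :: w' -> ~~ sf x y) ->
  red (finv g ++ w).
Proof.
elim: g w => [|x g IH] w //= rg rw hd.
rewrite finv_cons -catA cat1s.
move: rg; rewrite red_cons => /and3P [nx rg hg].
apply: IH => //.
- rewrite red_cons ntr_inv nx rw /=.
  case: w rw hd => [|y w'] // _ hd; rewrite sf_inv; exact: (hd x g y w').
- move=> x' g' y w' Eg [<- _]; rewrite sf_invr sf_sym; by rewrite Eg in hg.
Qed.

Lemma red_tail z w : red (z :: w) -> red w.
Proof. by rewrite red_cons => /and3P []. Qed.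

Lemma D_nil_l h : D [::] h = nm h.
Proof. by []. Qed.

Lemma D_nil_r g : red g -> D g [::] = nm g.
Proof.
move=> rg; rewrite /D fmul_red ?cats0 ?nm_finv //.
rewrite -[finv g]cats0; apply: red_inv_cat => //.
Qed.

Lemma D_same z g h : red (z :: g) -> D (z :: g) (z :: h) = D g h.
Proof.
rewrite red_cons => /and3P [nz _ _].
by rewrite /D fmul_finv_cons push_cancel.
Qed.

Lemma D_diff z g z' h : red (z :: g) -> red (z' :: h) -> ~~ sf z z' ->
  D (z :: g) (z' :: h) = nm (z :: g) + nm (z' :: h).
Proof.
move=> rg rh hs; rewrite /D fmul_red ?nm_cat ?nm_finv //.
apply: red_inv_cat => // x g' y w' [<- _] [<- _] //.
Qed.

Lemma D_samefac z g z' h : red (z :: g) -> red (z' :: h) -> z != z' -> sf z z' ->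
  D (z :: g) (z' :: h) = nm g + ldist z z' + nm h.
Proof.
move=> rg rh ne hs; rewrite /D fmul_finv_cons.
move: rg rh; rewrite !red_cons => /and3P [nz rg hg] /and3P [nz' rh hh].
have key : forall c, ntr c -> sf c z' -> nrm c = ldist z z' ->
   push (ilet z) (z' :: h) = c :: h ->
   nm (fmul (finv g) (push (ilet z) (z' :: h))) = nm g + ldist z z' + nm h.
  move=> c nc sc nrc ->.
  rewrite fmul_red; last first.
    apply: red_inv_cat => //.
      rewrite red_cons nc rh /=; case: h hh {rh} => [|y h'] //.
      by case: c sc {nc nrc}; case: z' {nz' ne hs}; case: y.
    move=> x g' y w' Eg [<- _]; rewrite Eg in hg; clear Eg.
    move: hg hs sc; clear -x z z' c; by case: x; case: z; case: z'; case: c.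
  by rewrite nm_cat nm_cons nm_finv nrc addrA.
case: z z' ne hs nz hg nz' hh key => [a|b] [a'|b'] //= ne _ nz hg nz' hh key.
- apply: (key (inl (mulA (invA a) a'))) => //=.
  + apply/eqP => H; move/eqP: ne; apply; congr inl; exact: (g_inv_mul_eq gA).
  + exact: (g_dist_inv_mul gA lA).
  + rewrite /fp_push /=.
    have -> : (invA a != eA) by have := ntr_inv (inl a); rewrite /= nz => ->.
    case: eqP => // H; exfalso; move/eqP: ne; apply; congr inl; exact: (g_inv_mul_eq gA).
- apply: (key (inr (mulB (invB b) b'))) => //=.
  + apply/eqP => H; move/eqP: ne; apply; congr inr; exact: (g_inv_mul_eq gB).
  + exact: (g_dist_inv_mul gB lB).
  + rewrite /fp_push /=.
    have -> : (invB b != eB) by have := ntr_inv (inr b); rewrite /= nz => ->.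
    case: eqP => // H; exfalso; move/eqP: ne; apply; congr inr; exact: (g_inv_mul_eq gB).
Qed.


Lemma ldist_sym z z' : ldist z z' = ldist z' z.
Proof.
case: mA => _ [_ [sA _]]; case: mB => _ [_ [sB _]].
case: z => [a|b]; case: z' => [a'|b'] //=; lra.
Qed.

Lemma ldist_le z z' : ldist z z' <= nrm z + nrm z'.
Proof.
case: mA => _ [_ [sA tA]]; case: mB => _ [_ [sB tB]].
case: z => [a|b]; case: z' => [a'|b'] //=.
- by rewrite (sA eA a); apply: tA.
- by rewrite (sB eB b); apply: tB.
Qed.

Lemma ldist_tri z z' : sf z z' -> nrm z' <= nrm z + ldist z z'.
Proof.
case: mA => _ [_ [sA tA]]; case: mB => _ [_ [sB tB]].
by case: z => [a|b]; case: z' => [a'|b'] //= _; first [apply: tA | apply: tB].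
Qed.

Lemma ldist_ge0 z z' : 0 <= ldist z z'.
Proof.
case: mA => pA _; case: mB => pB _.
have := nrm_ge0 z; have := nrm_ge0 z'.
case: z => [a|b]; case: z' => [a'|b'] /= h1 h2; rewrite ?pA ?pB //; lra.
Qed.

Lemma ldist_tri2 z z' : sf z z' -> nrm z <= nrm z' + ldist z z'.
Proof. by move=> h; rewrite ldist_sym; apply: ldist_tri; rewrite sf_sym. Qed.

Lemma D_le g h : red g -> red h -> D g h <= nm g + nm h.
Proof.
elim: g h => [|z g IH] [|z' h] rg rh.
- by rewrite D_nil_l nm_nil; lra.
- by rewrite D_nil_l nm_nil; lra.
- by rewrite D_nil_r // nm_nil; lra.
have rg' := red_tail rg; have rh' := red_tail rh.
case: (eqVneq z z') => [<-|ne].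
  rewrite D_same // !nm_cons; have := IH h rg' rh'; have := nrm_ge0 z; lra.
case hs: (sf z z').
  rewrite D_samefac // !nm_cons; have := ldist_le z z'; lra.
rewrite D_diff ?hs //; lra.
Qed.

Lemma D_ge g h : red g -> red h -> nm h <= nm g + D g h /\ nm g <= nm h + D g h.
Proof.
elim: g h => [|z g IH] [|z' h] rg rh.
- by rewrite D_nil_l nm_nil; lra.
- rewrite D_nil_l nm_nil; have := nm_ge0 (z' :: h); lra.
- rewrite D_nil_r // nm_nil; have := nm_ge0 (z :: g); lra.
have rg' := red_tail rg; have rh' := red_tail rh.
case: (eqVneq z z') => [<-|ne].
  rewrite D_same // !nm_cons; have := IH h rg' rh'; lra.
case hs: (sf z z').
  rewrite D_samefac // !nm_cons; have := ldist_tri hs; have := ldist_tri2 hs;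
  have := nm_ge0 g; have := nm_ge0 h; lra.
rewrite D_diff ?hs //; have := nm_ge0 (z :: g); have := nm_ge0 (z' :: h); lra.
Qed.

Fixpoint cross (m : R) (w : seq L) : option (seq L * L) :=
  match w with
  | [::] => None
  | z :: w' => if m <= nrm z then Some ([::], z) else
     match cross (m - nrm z) w' with Some (p, x) => Some (z :: p, x) | None => None end
  end.

Lemma cross_some m w : 0 < m -> m <= nm w -> exists p x, cross m w = Some (p, x).
Proof.
elim: w m => [|z w IH] m hm hw /=; first by rewrite nm_nil in hw; lra.
case: ifP => [_|hz]; first by exists [::], z.
rewrite nm_cons in hw; have hz' : nrm z < m by rewrite ltNge hz.
have [p [x ->]] := IH (m - nrm z) ltac:(lra) ltac:(lra).
by exists (z :: p), x.
Qed.

Lemma cross_lower g h m p x p' y : red g -> red h -> 0 < m ->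
  cross m g = Some (p, x) -> cross m h = Some (p', y) ->
  (p = p' /\ x = y) \/ (p = p' /\ sf x y /\ ldist x y <= D g h) \/
  (nm g - m < D g h) \/ (nm h - m < D g h).
Proof.
elim: g h m p x p' y => [|z g IH] [|z' h] m p x p' y rg rh hm //=.
have rg' := red_tail rg; have rh' := red_tail rh.
case: (eqVneq z z') => [<-|ne].
  rewrite D_same // !nm_cons.
  case: ifP => hz.
    by move=> [<- <-] [<- <-]; left.
  have hz' : nrm z < m by rewrite ltNge hz.
  case E1: (cross _ g) => [[p1 x1]|] // [<- <-].
  case E2: (cross _ h) => [[p2 x2]|] // [<- <-].
  have := IH h (m - nrm z) p1 x1 p2 x2 rg' rh' ltac:(lra) E1 E2.
  case=> [[-> ->]|[[-> [H1 H2]]|[H|H]]].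
  - by left.
  - by right; left.
  - by right; right; left; lra.
  - by right; right; right; lra.
have Dlow : nm g + nm h <= D (z :: g) (z' :: h).
  case hs: (sf z z').
    rewrite D_samefac //; have := ldist_ge0 z z'; lra.
  rewrite D_diff ?hs // !nm_cons; have := nrm_ge0 z; have := nrm_ge0 z'; lra.
rewrite !nm_cons.
case: ifP => hz; case: ifP => hz'.
- move=> [<- <-] [<- <-].
  case hs: (sf z z').
    by right; left; split => //; split => //; rewrite D_samefac //; have := nm_ge0 g;
    have := nm_ge0 h; lra.
  right; right; left; rewrite D_diff ?hs // !nm_cons; have := nm_ge0 (z' :: h);
  rewrite nm_cons; have := nm_ge0 g; lra.
- move=> _ _; right; right; right.
  have : nrm z' < m by rewrite ltNge hz'.
  have := nm_ge0 g; lra.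
- move=> _ _; right; right; left.
  have : nrm z < m by rewrite ltNge hz.
  have := nm_ge0 h; lra.
- move=> _ _; right; right; left.
  have : nrm z < m by rewrite ltNge hz.
  have := nm_ge0 h; lra.
Qed.

Lemma cross_upper g h m p x y : red g -> red h ->
  cross m g = Some (p, x) -> cross m h = Some (p, y) -> sf x y ->
  D g h <= (nm g - m) + (nm h - m) + ldist x y.
Proof.
elim: p g h m => [|z p IH] [|z1 g] [|z2 h] m rg rh //=.
- case: ifP => hz1; last by case: (cross _ g) => [[]|].
  case=> E1; case: ifP => hz2; last by case: (cross _ h) => [[]|].
  case=> E2; rewrite -E1 -E2 => hs.
  rewrite !nm_cons.
  case: (eqVneq z1 z2) => [E|ne].
    rewrite -?E D_same //; have := D_le (red_tail rg) (red_tail rh);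
    have := ldist_ge0 z1 z1; lra.
  rewrite D_samefac //; lra.
case: ifP => // hz1; case E1: (cross _ g) => [[p1 x1]|] // [e1 e2 e3].
case: ifP => // hz2; case E2: (cross _ h) => [[p2 x2]|] // [e4 e5 e6] hs.
subst.
rewrite D_same // !nm_cons.
have := IH g h _ (red_tail rg) (red_tail rh) E1 E2 hs; lra.
Qed.


Local Notation G := (FreeProd eA eB).
Local Notation fd := (fp_dist mulA invA eA mulB invB eB dA dB).

Lemma fdE (g h : G) : fd g h = D (proj1_sig g) (proj1_sig h).
Proof. by []. Qed.

Lemma ldist_refl x : ldist x x = 0.
Proof.
case: mA => _ [hA _]; case: mB => _ [hB _].
by case: x => [a|b] /=; [apply/hA | apply/hB].
Qed.

Definition ball (Lr : R) (g : G) : Prop := nm (proj1_sig g) < Lr.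
Definition bucket (Lr : R) (k : nat) (p : seq L) (P : L -> Prop) (g : G) : Prop :=
  k%:R * Lr <= nm (proj1_sig g) < k.+1%:R * Lr /\
  exists x, cross (k%:R * Lr - Lr / 2) (proj1_sig g) = Some (p, x) /\ P x.

Definition fam (Lr : R) (Q : (L -> Prop) -> Prop) (q : nat) (wb : bool) (S : G -> Prop) :=
  (wb /\ S = ball Lr) \/
  exists k p P, (0 < k)%N /\ (k %% 2)%N = q /\ Q P /\ S = bucket Lr k p P.

Lemma fam_ok (Lr r DQ : R) (Q : (L -> Prop) -> Prop) (q : nat) (wb : bool) :
  0 < r -> 2 * r < Lr ->
  (forall P P', Q P -> Q P' -> P <> P' -> forall x y, P x -> P' y -> r < ldist x y) ->
  (forall P, Q P -> forall x y, P x -> P y -> sf x y /\ ldist x y <= DQ) ->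
  (wb -> q = 0%N) ->
  unif_bounded fd (fam Lr Q q wb) /\ r_disjoint fd r (fam Lr Q q wb).
Proof.
move=> rpos rL Qdis Qbd wbq.
have Lpos : 0 < Lr by lra.
split.
  exists (3 * Lr + `|DQ|) => V [[_ ->]|[k [p [P [k0 [kq [QP ->]]]]]]] g h.
    rewrite /ball fdE => hg hh.
    have := D_le (proj2_sig g) (proj2_sig h); have := normr_ge0 DQ; lra.
  move=> [/andP [g1 g2] [x [cx Px]]] [/andP [h1 h2] [y [cy Py]]].
  have [sxy lxy] := Qbd P QP x y Px Py.
  rewrite fdE; have := cross_upper (proj2_sig g) (proj2_sig h) cx cy sxy.
  have := ler_norm DQ.
  move: g2 h2; rewrite -addn1 natrD mulrDl mul1r => g2 h2; lra.
have natL : forall a b : nat, (a <= b)%N -> a%:R * Lr <= b%:R * Lr.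
  by move=> a b ab; rewrite ler_wpM2r ?ler_nat //; lra.
have natS : forall a : nat, a.+1%:R * Lr = a%:R * Lr + Lr.
  by move=> a; rewrite -addn1 natrD mulrDl mul1r.
move=> V W FV FW VW g h gV hW; rewrite fdE.
have [Dg Dg'] := D_ge (proj2_sig g) (proj2_sig h).
case: FV => [[wbV EV]|[k [p [P [k0 [kq [QP EV]]]]]]];
case: FW => [[wbW EW]|[k' [p' [P' [k0' [kq' [QP' EW]]]]]]]; rewrite ?EV in gV; rewrite ?EW in hW.
- by exfalso; apply: VW; rewrite EV EW.
- move: gV hW; rewrite /ball /bucket => gV [/andP [h1 h2] _].
  have k2 : (2 <= k')%N by move: (wbq wbV) kq'; lia.
  have := natL _ _ k2.
  lra.
- move: gV hW; rewrite /ball /bucket => [[/andP [g1 g2] _]] hW.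
  have k2 : (2 <= k)%N by move: (wbq wbW) kq; lia.
  have := natL _ _ k2.
  lra.
move: gV hW; rewrite /bucket => [[/andP [g1 g2] [x [cx Px]]]] [/andP [h1 h2] [y [cy Py]]].
case: (ltngtP k k') => kk.
- have kk2 : (k.+2 <= k')%N by move: kq kq' kk; lia.
  have := natL _ _ kk2; rewrite !natS; move: g2; rewrite natS; lra.
- have kk2 : (k'.+2 <= k)%N by move: kq kq' kk; lia.
  have := natL _ _ kk2; rewrite !natS; move: h2; rewrite natS; lra.
subst k'.
have hk := natL _ _ k0; rewrite natS mul0r add0r in hk.
have mpos : 0 < k%:R * Lr - Lr / 2 by lra.
have := cross_lower (proj2_sig g) (proj2_sig h) mpos cx cy.
case=> [[ep exy]|[[ep [sxy lxy]]|[H|H]]]; last 2 first.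
- lra.
- lra.
- subst p' y.
  case: (classic (P = P')) => [EP|NP].
    by exfalso; apply: VW; rewrite EV EW EP.
  have := Qdis P P' QP QP' NP x x Px Py; rewrite ldist_refl; lra.
- subst p'.
  case: (classic (P = P')) => [EP|NP].
    by exfalso; apply: VW; rewrite EV EW EP.
  have := Qdis P P' QP QP' NP x y Px Py; lra.
Qed.


Definition liftA (V : A -> Prop) : L -> Prop := fun x => exists a, x = inl a /\ V a.
Definition liftB (V : B -> Prop) : L -> Prop := fun x => exists b, x = inr b /\ V b.
Definition QA (U : nat -> (A -> Prop) -> Prop) (nU i : nat) (P : L -> Prop) :=
  (i < nU)%N /\ exists V, U i V /\ P = liftA V.
Definition QB (U : nat -> (B -> Prop) -> Prop) (nU i : nat) (P : L -> Prop) :=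
  (i < nU)%N /\ exists V, U i V /\ P = liftB V.

Lemma sideA (U : nat -> (A -> Prop) -> Prop) (nU : nat) (RU : nat -> R) i r :
  (i < nU -> unif_bounded dA (U i) /\ r_disjoint dA (RU i) (U i))%N -> r <= RU i ->
  (forall P P', QA U nU i P -> QA U nU i P' -> P <> P' -> forall x y, P x -> P' y -> r < ldist x y)
  /\ exists DQ, forall P, QA U nU i P -> forall x y, P x -> P y -> sf x y /\ ldist x y <= DQ.
Proof.
move=> hU rR; split.
  move=> P P' [iU [V [UV ->]]] [_ [V' [UV' ->]]] NP x y [a [-> Va]] [a' [-> Va']] /=.
  have VV : V <> V' by move=> E; apply: NP; rewrite E.
  have := (proj2 (hU iU)) V V' UV UV' VV a a' Va Va'; lra.
case: (ltnP i nU) => iU; last first.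
  by exists 0 => P [H]; move: H; rewrite ltnNge iU.
have [DA HDA] := proj1 (hU iU).
exists DA => P [_ [V [UV ->]]] x y [a [-> Va]] [a' [-> Va']] /=.
split => //; exact: (HDA V UV a a' Va Va').
Qed.

Lemma sideB (U : nat -> (B -> Prop) -> Prop) (nU : nat) (RU : nat -> R) i r :
  (i < nU -> unif_bounded dB (U i) /\ r_disjoint dB (RU i) (U i))%N -> r <= RU i ->
  (forall P P', QB U nU i P -> QB U nU i P' -> P <> P' -> forall x y, P x -> P' y -> r < ldist x y)
  /\ exists DQ, forall P, QB U nU i P -> forall x y, P x -> P y -> sf x y /\ ldist x y <= DQ.
Proof.
move=> hU rR; split.
  move=> P P' [iU [V [UV ->]]] [_ [V' [UV' ->]]] NP x y [a [-> Va]] [a' [-> Va']] /=.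
  have VV : V <> V' by move=> E; apply: NP; rewrite E.
  have := (proj2 (hU iU)) V V' UV UV' VV a a' Va Va'; lra.
case: (ltnP i nU) => iU; last first.
  by exists 0 => P [H]; move: H; rewrite ltnNge iU.
have [DA HDA] := proj1 (hU iU).
exists DA => P [_ [V [UV ->]]] x y [a [-> Va]] [a' [-> Va']] /=.
split => //; exact: (HDA V UV a a' Va Va').
Qed.

Lemma main : asymptotic_property_C dA -> asymptotic_property_C dB -> asymptotic_property_C fd.
Proof.
move=> apcA apcB Rs Rpos Rmono.
have mono : forall i j, (i <= j)%N -> Rs i <= Rs j.
  move=> i j; elim: j => [|j IH]; first by rewrite leqn0 => /eqP ->.
  rewrite leq_eqVlt => /orP [/eqP -> //|]; rewrite ltnS => /IH h.
  exact: le_trans h (Rmono j).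
pose RA := fun i => Rs (4 * i + 3)%N.
have RApos : forall i, 0 < RA i by move=> i; exact: Rpos.
have RAmono : forall i, RA i <= RA i.+1 by move=> i; apply: mono; lia.
have [nA [UA [hUA cA]]] := apcA RA RApos RAmono.
have [nB [UB [hUB cB]]] := apcB RA RApos RAmono.
have nA0 : (0 < nA)%N by have [i [iA _]] := cA eA; lia.
pose n := (4 * maxn nA nB)%N.
pose Lr := 4 * Rs n.
have Lpos : 0 < Lr by have := Rpos n; rewrite /Lr; lra.
pose Qj := fun j : nat => if (j %/ 2 %% 2 == 0)%N then QA UA nA (j %/ 4) else QB UB nB (j %/ 4).
exists n, (fun j => fam Lr (Qj j) (j %% 2)%N (j == 0)%N); split.
  move=> j jn.
  have rr : Rs j <= RA (j %/ 4)%N by apply: mono; lia.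
  have rL : 2 * Rs j < Lr by have := mono j n (ltnW jn); have := Rpos n; rewrite /Lr; lra.
  have wbq : (j == 0)%N -> (j %% 2)%N = 0%N by move=> /eqP ->.
  rewrite /Qj; case: ifP => _.
    have [dis [DQ bd]] := sideA (hUA (j %/ 4)%N) rr.
    exact: fam_ok (Rpos j) rL dis bd wbq.
  have [dis [DQ bd]] := sideB (hUB (j %/ 4)%N) rr.
  exact: fam_ok (Rpos j) rL dis bd wbq.
move=> g.
have t0 : 0 <= nm (proj1_sig g) / Lr by apply: divr_ge0 => //; [exact: nm_ge0 | lra].
have /andP [k1 k2] := truncn_itv t0.
move: k1 k2; rewrite ler_pdivlMr // ltr_pdivrMr //.
set k := Num.trunc _ => k1 k2.
case: (posnP k) => k0.
  exists 0%N; split; first lia.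
  exists (ball Lr); split; first by left.
  by rewrite /ball; move: k2; rewrite k0 mul1r.
have hk : Lr <= k%:R * Lr by rewrite -[X in X <= _]mul1r ler_wpM2r ?(ler_nat R 1 k) //; lra.
have mpos : 0 < k%:R * Lr - Lr / 2 by lra.
have [p [x cx]] : exists p x, cross (k%:R * Lr - Lr / 2) (proj1_sig g) = Some (p, x).
  by apply: cross_some => //; lra.
case: x cx => [a|b] cx.
  have [i [iA [V [UV Va]]]] := cA a.
  exists (4 * i + (k %% 2))%N; split.
    rewrite /n; have : (nA <= maxn nA nB)%N by apply: leq_maxl. lia.
  exists (bucket Lr k p (liftA V)); split.
    right; exists k, p, (liftA V); split => //; split; first lia.
    split => //; rewrite /Qj.
    have -> : ((4 * i + k %% 2) %/ 2 %% 2)%N = 0%N by lia.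
    have -> : ((4 * i + k %% 2) %/ 4)%N = i by lia.
    by split => //; exists V.
  split; first by rewrite k1 k2.
  by exists (inl a); split => //; exists a.
have [i [iB [V [UV Va]]]] := cB b.
exists (4 * i + 2 + k %% 2)%N; split.
  rewrite /n; have : (nB <= maxn nA nB)%N by apply: leq_maxr. lia.
exists (bucket Lr k p (liftB V)); split.
  right; exists k, p, (liftB V); split => //; split; first lia.
  split => //; rewrite /Qj.
  have -> : ((4 * i + 2 + k %% 2) %/ 2 %% 2)%N = 1%N by lia.
  have -> : ((4 * i + 2 + k %% 2) %/ 4)%N = i by lia.
  by split => //; exists V.
split; first by rewrite k1 k2.
by exists (inr b); split => //; exists b.
Qed.

End FP.

Theorem theorem4p4 (A B : eqType)
  (mulA : A -> A -> A) (invA : A -> A) (eA : A)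
  (mulB : B -> B -> B) (invB : B -> B) (eB : B)
  (R : realType) (dA : A -> A -> R) (dB : B -> B -> R) :
  is_group mulA invA eA -> is_group mulB invB eB ->
  countable_type A -> countable_type B ->
  is_metric dA -> left_invariant mulA dA -> proper_metric dA ->
  is_metric dB -> left_invariant mulB dB -> proper_metric dB ->
  asymptotic_property_C dA -> asymptotic_property_C dB ->
  asymptotic_property_C (fp_dist mulA invA eA mulB invB eB dA dB).
Proof.
move=> gA gB _ _ mA lA _ mB lB _ cA cB.
exact: (main gA gB mA lA mB lB cA cB).
Qed.
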